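(* For every strongly connected component $C$ of $G$, the set $\Delta_C$ is connected.
   Context: $G$ is a finite directed graph (loops allowed) with vertex set $V$. $\Omega$ is the set of bi-infinite paths in $G$, i.e. sequences $(x_i)_{i\in\mathbb Z}\in V^{\mathbb Z}$ such that for every $i$ there is an edge from $x_i$ to $x_{i+1}$. Fix $h>0$. $\bar\Delta$ is the set of functions $x:\mathbb R\to V$ that are constant on each interval $[nh,(n+1)h)$, $n\in\mathbb Z$, and satisfy $(x(ih))_{i\in\mathbb Z}\in\Omega$. $\Delta=\{x(\cdot+t): x\in\bar\Delta,\ t\in\mathbb R\}$, with metric $d(x,y)=\sum_{i\in\mathbb Z}4^{-|i|}\frac1h\int_{ih}^{(i+1)h}\delta(x,y,t)\,dt$, where $\delta(x,y,t)=1$ if $x(t)\ne y(t)$ and $0$ otherwise. A strongly connected component of $G$ is a maximal nonempty set $C\subseteq V$ such that for all $u,v\in C$ (including $u=v$) there is a directed path of positive length from $u$ to $v$ with all vertices in $C$. The lift of $C$ is $\Delta_C=\{f\in\Delta: f(t)\in C \text{ for all } t\in\mathbb R\}$. *)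

(* Defs.v *)
From HB Require Import structures.
From mathcomp Require Import all_boot.
From Stdlib Require Import Reals ZArith ClassicalEpsilon.

Set Implicit Arguments.
Unset Strict Implicit.
Unset Printing Implicit Defensive.

Local Open Scope R_scope.

(* Riemann integral of f on [a,b] (0 if f is not Riemann integrable there;
   the functions integrated below are step functions, hence integrable). *)
Definition RInt (f : R -> R) (a b : R) : R :=
  match excluded_middle_informative (inhabited (Riemann_integrable f a b)) with
  | left H => RiemannInt (epsilon H (fun _ => True))
  | right _ => 0
  end.

Definition series (u : nat -> R) : R :=
  epsilon (inhabits 0) (fun l => infinite_sum u l).

(* Sum over Z, as the limit of the symmetric partial sums over [-n,n]. *)
Definition Zsum (f : Z -> R) : R :=
  series (fun k => match k with
                   | O => f 0%Z
                   | S _ => f (Z.of_nat k) + f (- Z.of_nat k)%Z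
                   end).

Section Graph.
Variables (V : finType) (E : rel V).

Definition pos_path_in (C : {set V}) (u v : V) : Prop :=
  exists s : seq V, s <> [::] /\ path E u s /\ last u s = v /\
                    u \in C /\ all (fun w => w \in C) s.

Definition strongly_connected_set (C : {set V}) : Prop :=
  C != set0 /\ forall u v, u \in C -> v \in C -> pos_path_in C u v.

Definition is_SCC (C : {set V}) : Prop :=
  strongly_connected_set C /\
  forall D : {set V}, strongly_connected_set D -> C \subset D -> D = C.

Definition in_Omega (x : Z -> V) : Prop := forall i : Z, E (x i) (x (i + 1)%Z).

Variable h : R.

Definition in_Delta_bar (x : R -> V) : Prop :=
  (forall (n : Z) (t : R), IZR n * h <= t < IZR (n + 1) * h -> x t = x (IZR n * h)) /\
  in_Omega (fun i => x (IZR i * h)).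

Definition in_Delta (f : R -> V) : Prop :=
  exists (x : R -> V) (t : R), in_Delta_bar x /\ forall s, f s = x (s + t).

Definition delta (x y : R -> V) (t : R) : R := if x t == y t then 0 else 1.

Definition dDelta (x y : R -> V) : R :=
  Zsum (fun i => (/ 4) ^ (Z.abs_nat i) *
                 (/ h * RInt (delta x y) (IZR i * h) (IZR (i + 1) * h))).

Definition Delta_C (C : {set V}) (f : R -> V) : Prop :=
  in_Delta f /\ forall t, f t \in C.

End Graph.

Definition rel_open {X : Type} (d : X -> X -> R) (A P : X -> Prop) : Prop :=
  forall x, A x -> P x -> exists eps, eps > 0 /\
     forall y, A y -> d x y < eps -> P y.

Definition connected_in {X : Type} (d : X -> X -> R) (A : X -> Prop) : Prop :=
  forall P : X -> Prop,
    rel_open d A P -> rel_open d A (fun x => ~ P x) ->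
    (forall x, A x -> P x) \/ (forall x, A x -> ~ P x).

(* Main.v *)
Require Import Defs.
From HB Require Import structures.
From mathcomp Require Import all_boot.
From Stdlib Require Import Reals ZArith Lra Lia ClassicalEpsilon Classical FunctionalExtensionality.
Local Open Scope R_scope.

Lemma inf_sum_bound (u : nat -> R) (L a b : R) :
  infinite_sum u L -> (forall n, a <= sum_f_R0 u n <= b) -> a <= L <= b.
Proof.
intros HL Hb. split.
- destruct (Rle_or_lt a L) as [H|H]; auto.
  destruct (HL (a - L)) as [N HN]; [lra|].
  specialize (HN N (Nat.le_refl N)). specialize (Hb N). unfold Rdist in HN.
  apply Rabs_def2 in HN. lra.
- destruct (Rle_or_lt L b) as [H|H]; auto.
  destruct (HL (L - b)) as [N HN]; [lra|].
  specialize (HN N (Nat.le_refl N)). specialize (Hb N). unfold Rdist in HN.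
  apply Rabs_def2 in HN. lra.
Qed.

Lemma series_bound (u : nat -> R) (M : R) :
  (forall k, 0 <= u k) -> (forall n, sum_f_R0 u n <= M) -> 0 <= series u <= M.
Proof.
intros H0 HM.
assert (Hg : Un_growing (sum_f_R0 u)).
{ intro n. simpl. specialize (H0 (S n)). lra. }
assert (Hub : has_ub (sum_f_R0 u)).
{ exists M. intros x [i ->]. apply HM. }
destruct (growing_cv _ Hg Hub) as [l Hl].
assert (Hs : infinite_sum u (series u)).
{ unfold series. apply (epsilon_spec (inhabits 0) (fun l => infinite_sum u l)).
  exists l. exact Hl. }
apply (inf_sum_bound _ _ 0 M Hs). intro n. split; auto.
apply cond_pos_sum; auto.
Qed.

Lemma half_pow_le (N k : nat) : (N <= k)%coq_nat -> (/2)^k <= (/2)^N.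
Proof.
intro H. replace k with (Nat.add N (Nat.sub k N)) by lia. rewrite pow_add.
assert (0 < (/2)^N) by (apply pow_lt; lra).
assert ((/2)^(Nat.sub k N) <= 1).
{ rewrite <- (pow1 (Nat.sub k N)). apply pow_incr. lra. }
assert (0 <= (/2)^(Nat.sub k N)) by (apply pow_le; lra).
nra.
Qed.

Lemma quarter_pow (N k : nat) : (N <= k)%coq_nat -> (/4)^k <= (/2)^N * (/2)^k.
Proof.
intro H. replace (/4) with (/2 * /2) by field. rewrite Rpow_mult_distr.
assert (0 <= (/2)^k) by (apply pow_le; lra).
pose proof (half_pow_le N k H). nra.
Qed.

Lemma abs_nat_of_nat k : Z.abs_nat (Z.of_nat k) = k.
Proof. lia. Qed.
Lemma abs_nat_opp_of_nat k : Z.abs_nat (- Z.of_nat k) = k.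
Proof. lia. Qed.

Lemma Zsum_bound (F : Z -> R) (c : R) (N : nat) :
  0 <= c -> (forall i, 0 <= F i) ->
  (forall i, F i <= c * (/4)^(Z.abs_nat i)) ->
  (forall i, (Z.abs_nat i < N)%coq_nat -> F i = 0) ->
  0 <= Zsum F <= 4 * c * (/2)^N.
Proof.
intros Hc H0 Hle Hz. unfold Zsum.
set (u := fun k : nat => match k with
                   | O => F 0%Z
                   | S _ => F (Z.of_nat k) + F (- Z.of_nat k)%Z
                   end).
assert (HN : 0 < (/2)^N) by (apply pow_lt; lra).
assert (Hu : forall k, u k <= 2 * c * (/2)^N * (/2)^k).
{ intro k. assert (0 < (/2)^k) by (apply pow_lt; lra).
  destruct (Nat.lt_ge_cases k N) as [Hk|Hk].
  - destruct k as [|k'].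
    + unfold u. rewrite Hz; [|simpl; lia]. apply Rmult_le_pos; [|lra].
      apply Rmult_le_pos; lra.
    + unfold u. rewrite !Hz; try (rewrite ?abs_nat_of_nat ?abs_nat_opp_of_nat; lia).
      assert (0 <= 2 * c * (/2)^N) by (apply Rmult_le_pos; lra). nra.
  - pose proof (quarter_pow N k Hk) as Q.
    destruct k as [|k'].
    + unfold u. specialize (Hle 0%Z). simpl in Hle, Q |- *. nra.
    + unfold u. pose proof (Hle (Z.of_nat (S k'))) as A.
      pose proof (Hle (- Z.of_nat (S k'))%Z) as B.
      rewrite abs_nat_of_nat in A. rewrite abs_nat_opp_of_nat in B. nra. }
apply series_bound.
- intro k. destruct k; unfold u; [apply H0|]. pose proof (H0 (Z.of_nat (S k))).
  pose proof (H0 (- Z.of_nat (S k))%Z). lra.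
- intro n. apply Rle_trans with (sum_f_R0 (fun k => (/2)^k * (2 * c * (/2)^N)) n).
  + apply sum_growing. intro k. rewrite Rmult_comm. apply Hu.
  + rewrite <- scal_sum. rewrite tech3; [|lra].
    assert (0 < (/2)^(S n)) by (apply pow_lt; lra).
    assert (0 <= 2 * c * (/2)^N) by (apply Rmult_le_pos; lra).
    replace ((1 - (/2)^(S n)) / (1 - /2)) with (2 - 2 * (/2)^(S n)) by field.
    nra.
Qed.
Lemma RInt_cases (f : R -> R) a b (P : R -> Prop) :
  P 0 -> (forall pr : Riemann_integrable f a b, P (RiemannInt pr)) -> P (RInt f a b).
Proof. intros H0 H1. unfold RInt. destruct excluded_middle_informative; auto. Qed.

Lemma RI_bounds f a b (pr : Riemann_integrable f a b) :
  a <= b -> (forall u, a < u < b -> 0 <= f u <= 1) -> 0 <= RiemannInt pr <= b - a.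
Proof.
intros Hab Hf. split.
- rewrite <- (Rmult_0_l (b - a)). rewrite <- (RiemannInt_P15 (RiemannInt_P14 a b 0)).
  apply RiemannInt_P19; auto. intros x Hx. unfold fct_cte. apply Hf; auto.
- rewrite <- (Rmult_1_l (b - a)). rewrite <- (RiemannInt_P15 (RiemannInt_P14 a b 1)).
  apply RiemannInt_P19; auto. intros x Hx. unfold fct_cte. apply Hf; auto.
Qed.

Lemma RI_zero f a b (pr : Riemann_integrable f a b) :
  a <= b -> (forall u, a < u < b -> f u = 0) -> RiemannInt pr = 0.
Proof.
intros Hab Hf. rewrite (RiemannInt_P18 pr (RiemannInt_P14 a b 0) Hab).
- rewrite RiemannInt_P15. ring.
- intros x Hx. unfold fct_cte. auto.
Qed.

Lemma RI_piece f a b m s (pr : Riemann_integrable f a b) :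
  a <= b -> b <= m -> 0 <= s -> (forall u, a < u < b -> 0 <= f u <= 1) ->
  (forall u, a < u < b -> u < m - s -> f u = 0) -> RiemannInt pr <= s.
Proof.
intros Hab Hbm Hs Hf Hz.
set (c := Rmax a (Rmin b (m - s))).
assert (Hc : a <= c <= b).
{ unfold c. split; [apply Rmax_l|]. apply Rmax_lub; auto. apply Rmin_l. }
pose proof (RiemannInt_P22 pr Hc) as pr1.
pose proof (RiemannInt_P23 pr Hc) as pr2.
rewrite <- (RiemannInt_P26 pr1 pr2 pr).
assert (RiemannInt pr1 = 0).
{ apply RI_zero; [lra|]. intros u Hu. apply Hz; [lra|].
  destruct Hu as [Hu1 Hu2]. unfold c in Hu2.
  destruct (Rmax_Rle a (Rmin b (m - s)) u) as [H _].
  unfold Rmax in Hu2. destruct (Rle_dec a (Rmin b (m - s))); [|lra].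
  unfold Rmin in Hu2. destruct (Rle_dec b (m - s)); lra. }
assert (RiemannInt pr2 <= b - c).
{ apply RI_bounds; [lra|]. intros u Hu. apply Hf; lra. }
assert (b - c <= s).
{ unfold c. unfold Rmax, Rmin. destruct (Rle_dec b (m - s));
  destruct (Rle_dec a _); lra. }
lra.
Qed.

Lemma RInt_two f a p b m s :
  a <= p <= b -> b <= m -> 0 <= s -> (forall u, a < u < b -> 0 <= f u <= 1) ->
  (forall u, a < u < p -> u < p - s -> f u = 0) ->
  (forall u, p < u < b -> u < m - s -> f u = 0) -> RInt f a b <= 2 * s.
Proof.
intros Hp Hbm Hs Hf Hz1 Hz2. apply RInt_cases; [lra|]. intro pr.
pose proof (RiemannInt_P22 pr Hp) as pr1.
pose proof (RiemannInt_P23 pr Hp) as pr2.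
rewrite <- (RiemannInt_P26 pr1 pr2 pr).
assert (RiemannInt pr1 <= s).
{ apply (@RI_piece f a p p s pr1); try lra; intros u Hu; [apply Hf; lra| apply Hz1; lra]. }
assert (RiemannInt pr2 <= s).
{ apply (@RI_piece f p b m s pr2); try lra; intros u Hu; [apply Hf; lra| apply Hz2; lra]. }
lra.
Qed.

Lemma RInt_bounds f a b : a <= b -> (forall u, a < u < b -> 0 <= f u <= 1) ->
  0 <= RInt f a b <= b - a.
Proof. intros. apply RInt_cases; [lra|]. intro pr. apply RI_bounds; auto. Qed.

Lemma RInt_zero f a b : a <= b -> (forall u, a < u < b -> f u = 0) -> RInt f a b = 0.
Proof. intros. apply RInt_cases; auto. intro pr. apply RI_zero; auto. Qed.

Lemma delta01 {V : finType} (x y : R -> V) u : 0 <= delta x y u <= 1.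
Proof. unfold delta. destruct (x u == y u); lra. Qed.

Lemma dist_sym {V : finType} h (x y : R -> V) : dDelta h x y = dDelta h y x.
Proof.
unfold dDelta. replace (delta y x) with (delta x y); [reflexivity|].
apply functional_extensionality. intro u. unfold delta. rewrite eq_sym. reflexivity.
Qed.

Lemma cell_len h i : IZR (i + 1) * h - IZR i * h = h.
Proof. rewrite plus_IZR. ring. Qed.

Lemma dist_gen {V : finType} h (hpos : 0 < h) (f g : R -> V) (c : R) (N : nat) :
  0 <= c ->
  (forall i, RInt (delta f g) (IZR i * h) (IZR (i + 1) * h) <= c * h) ->
  (forall i u, (Z.abs_nat i < N)%coq_nat -> IZR i * h < u < IZR (i + 1) * h -> f u = g u) ->
  0 <= dDelta h f g <= 4 * c * (/2)^N.
Proof.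
intros Hc Hb Hag. unfold dDelta. apply Zsum_bound; auto.
- intro i. apply Rmult_le_pos; [apply pow_le; lra|].
  apply Rmult_le_pos; [left; apply Rinv_0_lt_compat; lra|].
  apply RInt_bounds; [pose proof (cell_len h i); lra|]. intros. apply delta01.
- intro i. rewrite (Rmult_comm c). apply Rmult_le_compat_l; [apply pow_le; lra|].
  specialize (Hb i). apply Rmult_le_reg_l with h; auto.
  rewrite <- Rmult_assoc, Rinv_r, Rmult_1_l; lra.
- intros i Hi. rewrite RInt_zero; [ring| pose proof (cell_len h i); lra|].
  intros u Hu. unfold delta. rewrite (Hag i u Hi Hu) eqxx. reflexivity.
Qed.

Lemma dist_agree {V : finType} h (hpos : 0 < h) (f g : R -> V) (N : nat) :
  (forall i u, (Z.abs_nat i < N)%coq_nat -> IZR i * h < u < IZR (i + 1) * h -> f u = g u) ->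
  dDelta h f g <= 4 * (/2)^N.
Proof.
intro Hag. pose proof (@dist_gen V h hpos f g 1 N) as H.
rewrite Rmult_1_r in H. apply H; auto; [lra|].
intro i. rewrite Rmult_1_l. pose proof (cell_len h i).
pose proof (RInt_bounds (delta f g) (IZR i * h) (IZR (i + 1) * h)).
assert (0 <= RInt (delta f g) (IZR i * h) (IZR (i + 1) * h) <= IZR (i + 1) * h - IZR i * h).
{ apply H1; [lra|]. intros; apply delta01. }
lra.
Qed.

Lemma dist_shift {V : finType} (E : rel V) h (hpos : 0 < h) (f : R -> V) (s : R) :
  in_Delta E h f -> 0 < s <= h / 2 -> dDelta h f (fun u => f (u + s)) <= 8 * s / h.
Proof.
intros [x [t [[Hcell _] Hf]]] Hs.
assert (Hc : 0 <= 2 * s / h).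
{ apply Rmult_le_pos; [lra| left; apply Rinv_0_lt_compat; lra]. }
pose proof (@dist_gen V h hpos f (fun u => f (u + s)) (2 * s / h) 0 Hc) as H.
replace (8 * s / h) with (4 * (2 * s / h) * (/2)^0) by (simpl; field; lra).
apply H; [| intros; lia].
intro i. replace (2 * s / h * h) with (2 * s) by (field; lra).
set (n := up (IZR i + t / h)).
destruct (archimed (IZR i + t / h)) as [A1 A2]. fold n in A1, A2.
assert (Ht : t = t / h * h) by (field; lra).
assert (B1 : IZR n * h > IZR i * h + t).
{ rewrite Ht. assert ((IZR n - (IZR i + t/h)) * h > 0) by (apply Rmult_lt_0_compat; lra). nra. }
assert (B2 : IZR n * h <= IZR i * h + t + h).
{ rewrite Ht. assert ((1 - (IZR n - (IZR i + t/h))) * h >= 0) by (apply Rle_ge, Rmult_le_pos; lra). nra. }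
pose proof (cell_len h i) as CL.
apply (@RInt_two _ (IZR i * h) (IZR n * h - t) (IZR (i + 1) * h) (IZR n * h - t + h) s); try lra.
- intros; apply delta01.
- intros u Hu Hu2. unfold delta. rewrite !Hf.
  rewrite (Hcell (n - 1)%Z (u + t)); [rewrite (Hcell (n - 1)%Z (u + s + t))|].
  + rewrite eqxx. reflexivity.
  + replace (n - 1 + 1)%Z with n by ring. rewrite minus_IZR. lra.
  + replace (n - 1 + 1)%Z with n by ring. rewrite minus_IZR. lra.
- intros u Hu Hu2. unfold delta. rewrite !Hf.
  rewrite (Hcell n (u + t)); [rewrite (Hcell n (u + s + t))|].
  + rewrite eqxx. reflexivity.
  + rewrite plus_IZR. lra.
  + rewrite plus_IZR. lra.
Qed.

Lemma shift_Delta_C {V : finType} (E : rel V) h C (f : R -> V) r :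
  Delta_C E h C f -> Delta_C E h C (fun u => f (u + r)).
Proof.
intros [[x [t [Hx Hf]]] HC]. split; [|intro; apply HC].
exists x, (r + t). split; auto. intro s. rewrite Hf. f_equal. ring.
Qed.

Lemma shift_shift {V : Type} (f : R -> V) r s :
  (fun u => (fun v => f (v + r)) (u + s)) = (fun u => f (u + (r + s))).
Proof. apply functional_extensionality. intro u. f_equal. ring. Qed.

Lemma shift0 {V : Type} (f : R -> V) : (fun u => f (u + 0)) = f.
Proof. apply functional_extensionality. intro u. f_equal. ring. Qed.

Lemma small_pos h eps X : 0 < h -> 0 < eps -> 0 < X ->
  exists s, 0 < s /\ s <= h / 2 /\ 8 * s / h < eps /\ s <= X.
Proof.
intros Hh He HX. exists (Rmin (Rmin (h/2) (eps * h / 16)) X).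
assert (0 < eps * h / 16) by (apply Rmult_lt_0_compat; [nra|lra]).
repeat split.
- repeat apply Rmin_pos; lra.
- eapply Rle_trans; [apply Rmin_l|apply Rmin_l].
- assert (Rmin (Rmin (h/2) (eps * h / 16)) X <= eps * h / 16).
  { eapply Rle_trans; [apply Rmin_l|apply Rmin_r]. }
  assert (0 < Rmin (Rmin (h/2) (eps * h / 16)) X) by (repeat apply Rmin_pos; lra).
  apply Rmult_lt_reg_r with h; auto. unfold Rdiv. rewrite Rmult_assoc. rewrite Rinv_l; lra.
- apply Rmin_r.
Qed.

Lemma orbit {V : finType} (E : rel V) h (hpos : 0 < h) C (P : (R -> V) -> Prop) :
  rel_open (dDelta h) (Delta_C E h C) P ->
  rel_open (dDelta h) (Delta_C E h C) (fun x => ~ P x) ->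
  forall f, Delta_C E h C f -> forall T, 0 <= T -> P f -> P (fun u => f (u + T)).
Proof.
intros HP HnP f Hf T HT Pf.
set (fr := fun r => fun u => f (u + r)).
assert (Hfr : forall r, Delta_C E h C (fr r)) by (intro; apply shift_Delta_C; auto).
assert (Hfr0 : fr 0 = f) by apply shift0.
assert (Hss : forall r s, (fun u => fr r (u + s)) = fr (r + s)) by (intros; apply shift_shift).
assert (Hd : forall r s, 0 < s <= h / 2 -> dDelta h (fr r) (fr (r + s)) <= 8 * s / h).
{ intros r s Hs. rewrite <- Hss. apply (dist_shift E); auto. apply Hfr. }
set (S := fun r => 0 <= r <= T /\ forall r', 0 <= r' <= r -> P (fr r')).
assert (HS0 : S 0).
{ split; [lra|]. intros r' Hr'. replace r' with 0 by lra. rewrite Hfr0. auto. }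
assert (Hbd : bound S) by (exists T; intros r [Hr _]; lra).
destruct (completeness S Hbd (ex_intro _ 0 HS0)) as [sg [Hub Hlub]].
assert (Hsg0 : 0 <= sg) by (apply Hub; auto).
assert (HsgT : sg <= T) by (apply Hlub; intros r [Hr _]; lra).
assert (K : forall r, 0 <= r < sg -> P (fr r)).
{ intros r Hr. destruct (classic (exists r1, S r1 /\ r < r1)) as [[r1 [[_ H1] H2]]|Hn].
  - apply H1; lra.
  - assert (sg <= r); [|lra]. apply Hlub. intros r1 H1.
    destruct (Rle_or_lt r1 r); auto. exfalso; apply Hn; eauto. }
destruct (classic (P (fr sg))) as [Psg|nPsg].
- destruct (Req_dec sg T) as [->|Hne]; [exact Psg|].
  destruct (HP (fr sg) (Hfr sg) Psg) as [eps [Heps Hball]].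
  destruct (small_pos h eps (T - sg) hpos Heps) as [s [Hs1 [Hs2 [Hs3 Hs4]]]]; [lra|].
  assert (S (sg + s)).
  { split; [lra|]. intros r' Hr'.
    destruct (Rtotal_order r' sg) as [Hlt|[Heq|Hgt]].
    - apply K; lra.
    - rewrite Heq; auto.
    - replace r' with (sg + (r' - sg)) by ring. apply Hball; [apply Hfr|].
      eapply Rle_lt_trans; [apply Hd; lra|].
      eapply Rle_lt_trans; [|apply Hs3].
      unfold Rdiv. apply Rmult_le_compat_r; [left; apply Rinv_0_lt_compat; lra| lra]. }
  assert (sg + s <= sg) by (apply Hub; auto). lra.
- exfalso. destruct (Req_dec sg 0) as [Hz|Hnz].
  + apply nPsg. rewrite Hz. rewrite Hfr0. auto.
  + destruct (HnP (fr sg) (Hfr sg) nPsg) as [eps [Heps Hball]].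
    destruct (small_pos h eps sg hpos Heps) as [s [Hs1 [Hs2 [Hs3 Hs4]]]]; [lra|].
    apply (Hball (fr (sg - s))); [apply Hfr| |apply K; lra].
    rewrite dist_sym. replace (fr sg) with (fr ((sg - s) + s)) by (f_equal; ring).
    eapply Rle_lt_trans; [apply Hd; lra| exact Hs3].
Qed.

Definition glue {V : Type} (xs ys : Z -> V) (K J : Z) (u0 : V) (s : seq V) (i : Z) : V :=
  if Z_lt_dec i K then xs i
  else if Z_le_dec i (K + Z.of_nat (size s)) then nth u0 (u0 :: s) (Z.to_nat (i - K))
  else ys (i - (K + Z.of_nat (size s) - J))%Z.

Lemma nth_cons_last {V : Type} (u0 : V) s : nth u0 (u0 :: s) (size s) = last u0 s.
Proof. have := nth_last u0 (u0 :: s). simpl. auto. Qed.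

Lemma glue_edges {V : finType} (E : rel V) (xs ys : Z -> V) K J s :
  (forall i, E (xs i) (xs (i + 1)%Z)) -> (forall i, E (ys i) (ys (i + 1)%Z)) ->
  path E (xs K) s -> last (xs K) s = ys J ->
  forall i, E (glue xs ys K J (xs K) s i) (glue xs ys K J (xs K) s (i + 1)%Z).
Proof.
intros Hx Hy Hp Hl i. unfold glue.
set (l := Z.of_nat (size s)).
destruct (Z_lt_dec i K) as [H1|H1]; destruct (Z_lt_dec (i + 1) K) as [H2|H2].
- apply Hx.
- destruct (Z_le_dec (i + 1) (K + l)) as [H3|H3]; [|unfold l in *; lia].
  replace (Z.to_nat (i + 1 - K)) with 0%nat by lia. simpl.
  replace (xs K) with (xs (i + 1)%Z) by (f_equal; lia). apply Hx.
- lia.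
- destruct (Z_le_dec i (K + l)) as [H3|H3];
  destruct (Z_le_dec (i + 1) (K + l)) as [H4|H4].
  + replace (Z.to_nat (i + 1 - K)) with (S (Z.to_nat (i - K))) by lia.
    simpl nth at 2. apply (pathP (xs K) Hp). apply/ltP. unfold l in *. lia.
  + assert (i = K + l)%Z as -> by lia.
    replace (Z.to_nat (K + l - K)) with (size s) by (unfold l; lia).
    rewrite nth_cons_last Hl.
    replace (K + l + 1 - (K + l - J))%Z with (J + 1)%Z by ring. apply Hy.
  + lia.
  + replace (i + 1 - (K + l - J))%Z with ((i - (K + l - J)) + 1)%Z by ring. apply Hy.
Qed.

Lemma glue_in {V : finType} (C : {set V}) (xs ys : Z -> V) K J u0 s :
  (forall i, xs i \in C) -> (forall i, ys i \in C) -> u0 \in C ->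
  all (fun w => w \in C) s -> forall i, glue xs ys K J u0 s i \in C.
Proof.
intros Hx Hy Hu Hs i. unfold glue.
destruct (Z_lt_dec i K); [apply Hx|].
destruct (Z_le_dec _ _); [|apply Hy].
set (k := Z.to_nat (i - K)).
have Hall : all (fun w => w \in C) (u0 :: s) by simpl; rewrite Hu Hs.
destruct (ltnP k (size (u0 :: s))) as [Hk|Hk].
- exact: (allP Hall _ (mem_nth u0 Hk)).
- rewrite nth_default //.
Qed.

Definition fl (h w : R) : Z := (up (w / h) - 1)%Z.

Lemma fl_spec h w : 0 < h -> IZR (fl h w) * h <= w < IZR (fl h w + 1) * h.
Proof.
intro hp. unfold fl. destruct (archimed (w / h)) as [A1 A2].
replace (up (w / h) - 1 + 1)%Z with (up (w / h)) by ring. rewrite minus_IZR.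
assert (Hw : w = w / h * h) by (field; lra).
split.
- assert ((IZR (up (w/h)) - 1) * h <= w / h * h) by (apply Rmult_le_compat_r; lra). lra.
- assert (w / h * h < IZR (up (w/h)) * h) by (apply Rmult_lt_compat_r; lra). lra.
Qed.

Lemma fl_unique h w n : 0 < h -> IZR n * h <= w < IZR (n + 1) * h -> fl h w = n.
Proof.
intros hp Hn. pose proof (fl_spec h w hp) as Hf.
assert (A : IZR (fl h w) < IZR (n + 1)).
{ apply Rmult_lt_reg_r with h; auto. lra. }
assert (B : IZR n < IZR (fl h w + 1)).
{ apply Rmult_lt_reg_r with h; auto. lra. }
apply lt_IZR in A. apply lt_IZR in B. lia.
Qed.

Lemma fl_mono h w1 w2 : 0 < h -> w1 <= w2 -> (fl h w1 <= fl h w2)%Z.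
Proof.
intros hp Hw. pose proof (fl_spec h w1 hp). pose proof (fl_spec h w2 hp).
assert (A : IZR (fl h w1) < IZR (fl h w2 + 1)).
{ apply Rmult_lt_reg_r with h; auto. lra. }
apply lt_IZR in A. lia.
Qed.

Lemma fl_shift h w M : 0 < h -> fl h (w + IZR M * h) = (fl h w + M)%Z.
Proof.
intro hp. apply fl_unique; auto. pose proof (fl_spec h w hp) as [A B].
generalize (fl h w) A B. intros F A' B'.
rewrite (plus_IZR F 1) in B'. rewrite (plus_IZR (F + M) 1). rewrite (plus_IZR F M).
rewrite !Rmult_plus_distr_r in B' |- *. lra.
Qed.

Lemma Delta_C_rep {V : finType} (E : rel V) h C (f : R -> V) : 0 < h ->
  Delta_C E h C f -> exists x t,
    (forall i, E (x (IZR i * h)) (x (IZR (i + 1) * h))) /\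
    (forall s, f s = x (s + t)) /\ (forall w, x w \in C) /\
    (forall w, x w = x (IZR (fl h w) * h)).
Proof.
intros hp [[x [t [[Hcell Hom] Hf]]] HC]. exists x, t. split; [|split; [|split]].
- intro i. apply Hom.
- exact Hf.
- intro w. replace w with ((w - t) + t) by ring. rewrite <- Hf. apply HC.
- intro w. apply Hcell. apply fl_spec; auto.
Qed.

Theorem mainTheorem8 (V : finType) (E : rel V) (h : R) (hpos : (0 < h)%R)
  (C : {set V}) (hC : is_SCC E C) :
  connected_in (dDelta h) (Delta_C E h C).
Proof.
intros P HP HnP.
destruct (classic (forall x, Delta_C E h C x -> P x)) as [H|H]; [left; exact H|right].
intros f Af Pf. apply H. intros g Ag. apply NNPP. intro nPg.
destruct (HP f Af Pf) as [e1 [He1 B1]].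
destruct (HnP g Ag nPg) as [e2 [He2 B2]].
assert (He : 0 < Rmin e1 e2 / 4) by (pose proof (Rmin_pos e1 e2 He1 He2); lra).
destruct (pow_lt_1_zero (/2) ltac:(rewrite Rabs_right; lra) _ He) as [N HN].
assert (HN4 : 4 * (/2)^N < Rmin e1 e2).
{ specialize (HN N (Nat.le_refl N)). rewrite Rabs_right in HN; [lra|].
  apply Rle_ge, pow_le; lra. }
assert (Hd1 : 4 * (/2)^N < e1) by (pose proof (Rmin_l e1 e2); lra).
assert (Hd2 : 4 * (/2)^N < e2) by (pose proof (Rmin_r e1 e2); lra).
destruct (@Delta_C_rep V E h C f hpos Af) as [x [t [Hex [Hfx [HCx Hflx]]]]].
destruct (@Delta_C_rep V E h C g hpos Ag) as [y [t2 [Hey [Hgy [HCy Hfly]]]]].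
set (xs := fun i : Z => x (IZR i * h)).
set (ys := fun i : Z => y (IZR i * h)).
set (NR := IZR (Z.of_nat N)).
set (J := (fl h (- NR * h + t2) - 1)%Z).
set (K := Z.max (fl h (NR * h + t) + 1) (J + up ((t - t2) / h))).
destruct hC as [[_ Hsc] _].
destruct (Hsc (xs K) (ys J) (HCx _) (HCy _)) as [s [_ [Hp [Hl [Hu Hs]]]]].
set (l := Z.of_nat (size s)).
set (M := (K + l - J)%Z).
set (z := glue xs ys K J (xs K) s).
set (x' := fun w => z (fl h w)).
set (g' := fun u => x' (u + t)).
set (T := t2 - t + IZR M * h).
assert (Ag' : Delta_C E h C g').
{ split.
  - exists x', t. split; [|intro; reflexivity]. split.
    + intros n w Hw. unfold x'. rewrite (@fl_unique h w n hpos Hw).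
      rewrite (@fl_unique h (IZR n * h) n hpos); [reflexivity|].
      rewrite plus_IZR. lra.
    + intro i. unfold x'.
      rewrite (@fl_unique h (IZR i * h) i hpos); [|rewrite plus_IZR; lra].
      rewrite (@fl_unique h (IZR (i + 1) * h) (i + 1) hpos); [|rewrite !plus_IZR; lra].
      apply glue_edges; [exact Hex|exact Hey|exact Hp|exact Hl].
  - intro u. unfold g', x', z. apply glue_in; [intro; apply HCx|intro; apply HCy|exact Hu|exact Hs]. }
assert (Pg' : P g').
{ apply (B1 g' Ag'). eapply Rle_lt_trans; [|exact Hd1].
  apply dist_agree; auto. intros i u Hi Hu'.
  assert (Hu2 : u <= NR * h).
  { assert (IZR (i + 1) <= NR) by (unfold NR; apply IZR_le; lia).
    assert (IZR (i + 1) * h <= NR * h) by (apply Rmult_le_compat_r; lra). lra. }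
  unfold g', x', z, glue. rewrite Hfx. rewrite Hflx.
  destruct (Z_lt_dec (fl h (u + t)) K) as [Hlt|Hlt]; [reflexivity|].
  exfalso. apply Hlt. pose proof (@fl_mono h (u + t) (NR * h + t) hpos ltac:(lra)).
  unfold K. lia. }
assert (HT : 0 <= T).
{ unfold T. destruct (archimed ((t - t2) / h)) as [A1 _].
  assert (HM : IZR (up ((t - t2) / h)) <= IZR M).
  { apply IZR_le. unfold M, l, K. lia. }
  assert (((t - t2) / h) * h <= IZR M * h) by (apply Rmult_le_compat_r; lra).
  replace ((t - t2) / h * h) with (t - t2) in H0 by (field; lra). lra. }
assert (Pg'' : P (fun u => g' (u + T))) by (exact (@orbit V E h hpos C P HP HnP g' Ag' T HT Pg')).
apply (B2 (fun u => g' (u + T))); [apply shift_Delta_C; auto| |exact Pg''].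
eapply Rle_lt_trans; [|exact Hd2].
apply dist_agree; auto. intros i u Hi Hu'.
assert (Hu2 : - NR * h <= u).
{ assert (- NR <= IZR i) by (unfold NR; rewrite <- opp_IZR; apply IZR_le; lia).
  assert (- NR * h <= IZR i * h) by (apply Rmult_le_compat_r; lra). lra. }
unfold g', x'. rewrite Hgy. rewrite Hfly.
replace (u + T + t) with ((u + t2) + IZR M * h) by (unfold T; ring).
rewrite (fl_shift _ _ _ hpos).
pose proof (@fl_mono h (- NR * h + t2) (u + t2) hpos ltac:(lra)) as Hm.
unfold z, glue.
destruct (Z_lt_dec (fl h (u + t2) + M) K) as [H1|H1]; [exfalso; unfold M, J in *; lia|].
destruct (Z_le_dec (fl h (u + t2) + M) (K + Z.of_nat (size s))) as [H2|H2];
  [exfalso; unfold M, J, l in *; lia|].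
unfold ys. replace (fl h (u + t2) + M - (K + Z.of_nat (size s) - J))%Z with (fl h (u + t2)) by (unfold M, l; ring). reflexivity.
Qed.
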